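(* Let $F_2=\langle r,s\mid\ \rangle$ be the free group of rank two and $\phi_*\colon F_2\to F_2$ the automorphism $r\mapsto s$, $s\mapsto rs$. Then $$\{\chi_\rho\in X(F_2,\mathrm{SL}(2,\mathbb{C}))\mid \phi^*(\chi_\rho)=\overline{\chi_\rho}\}\cong\{x\in\mathbb{C}\mid |x-1|=1\},$$ the homeomorphism being given by $x=\mathrm{trace}(\rho(s))=\chi_\rho(s)$.
   Context: $X(F_2,\mathrm{SL}(2,\mathbb{C}))$ is the $\mathrm{SL}(2,\mathbb{C})$-character variety of $F_2$, whose points are characters $\chi_\rho(\gamma)=\mathrm{trace}(\rho(\gamma))$ of representations $\rho\colon F_2\to\mathrm{SL}(2,\mathbb{C})$. $\phi^*(\chi)=\chi\circ\phi_*$, and $\overline{\chi}(\gamma)=\overline{\chi(\gamma)}$. *)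

(* Defs.v *)
From HB Require Import structures.
From mathcomp Require Import all_boot all_order all_algebra.
From mathcomp Require Import complex reals.
Set Implicit Arguments. Unset Strict Implicit. Unset Printing Implicit Defensive.
Import Order.TTheory GRing.Theory Num.Theory.
Local Open Scope ring_scope.
Local Open Scope complex_scope.

(* Elements of the free group F_2 = <r, s | > are represented by words in
   r, r^-1, s, s^-1 (all functions below respect free reduction). *)
Inductive letter := Rl | Ri | Sl | Si.
Definition word := seq letter.
Definition gen_r : word := [:: Rl].
Definition gen_s : word := [:: Sl].

Definition SL2 (R : realType) (A : 'M[R[i]]_2) : Prop := \det A = 1.

(* A representation rho : F_2 -> SL(2,C) is determined by rho(r) = A, rho(s) = B. *)
Definition eval_letter (R : realType) (A B : 'M[R[i]]_2) (l : letter) : 'M[R[i]]_2 :=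
  match l with
  | Rl => A | Ri => invmx A | Sl => B | Si => invmx B
  end.
Definition eval_word (R : realType) (A B : 'M[R[i]]_2) (w : word) : 'M[R[i]]_2 :=
  foldr (fun l M => eval_letter A B l *m M) 1%:M w.

Definition char_of (R : realType) (A B : 'M[R[i]]_2) : word -> R[i] :=
  fun w => \tr (eval_word A B w).

(* Points of X(F_2, SL(2,C)) : characters of representations. *)
Definition is_character (R : realType) (chi : word -> R[i]) : Prop :=
  exists A B : 'M[R[i]]_2, SL2 A /\ SL2 B /\ forall w, chi w = char_of A B w.

Definition phi_letter (l : letter) : word :=
  match l with
  | Rl => [:: Sl] | Ri => [:: Si] | Sl => [:: Rl; Sl] | Si => [:: Si; Ri]
  end.
Definition phi_word (w : word) : word := flatten (map phi_letter w).

Definition phi_star (R : realType) (chi : word -> R[i]) : word -> R[i] :=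
  fun w => chi (phi_word w).

Definition conj_char (R : realType) (chi : word -> R[i]) : word -> R[i] :=
  fun w => (chi w)^*.

Definition fixed_set (R : realType) (chi : word -> R[i]) : Prop :=
  is_character chi /\ forall w, phi_star chi w = conj_char chi w.

Definition circle (R : realType) (x : R[i]) : Prop := `|x - 1| = 1.

Definition continuous_on_set (R : realType) (P : R[i] -> Prop) (f : R[i] -> R[i]) : Prop :=
  forall x, P x -> forall e : R[i], 0 < e ->
    exists d : R[i], 0 < d /\ forall y, P y -> `|y - x| < d -> `|f y - f x| < e.

(* Main.v *)
Require Import Defs.
From HB Require Import structures.
From mathcomp Require Import all_boot all_order all_algebra.
From mathcomp Require Import complex reals.
From mathcomp Require Import ring.
Set Implicit Arguments. Unset Strict Implicit. Unset Printing Implicit Defensive.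
Import Order.TTheory GRing.Theory Num.Theory.
Local Open Scope ring_scope.

Definition mx22 (F : comNzRingType) (a b c d : F) : 'M[F]_2 :=
  \matrix_(i, j) if (i : nat) == 0%N then (if (j : nat) == 0%N then a else b)
                 else (if (j : nat) == 0%N then c else d).

Lemma mx22E (F : comNzRingType) (A : 'M[F]_2) :
  A = mx22 (A 0 0) (A 0 1) (A 1 0) (A 1 1).
Proof.
apply/matrixP => i j; rewrite mxE.
case: i => [[|[|//]]] Hi; case: j => [[|[|//]]] Hj /=;
 congr (A _ _); exact: val_inj.
Qed.

Lemma mx22P (F : comNzRingType) (A : 'M[F]_2) :
  exists a b c d, A = mx22 a b c d.
Proof. by exists (A 0 0), (A 0 1), (A 1 0), (A 1 1); apply: mx22E. Qed.

Lemma mx22_eq (F : comNzRingType) (a b c d a' b' c' d' : F) :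
  a = a' -> b = b' -> c = c' -> d = d' -> mx22 a b c d = mx22 a' b' c' d'.
Proof. by move=> -> -> -> ->. Qed.

Lemma det_mx22 (F : comNzRingType) (a b c d : F) :
  \det (mx22 a b c d) = a * d - b * c.
Proof.
rewrite (expand_det_row _ ord0) !big_ord_recr big_ord0 /= add0r.
rewrite /cofactor !det_mx11 /= !mxE /= expr0 expr1; ring.
Qed.

Lemma tr_mx22 (F : comNzRingType) (a b c d : F) : \tr (mx22 a b c d) = a + d.
Proof. by rewrite /mxtrace !big_ord_recr big_ord0 /= add0r !mxE. Qed.

Lemma mul_mx22 (F : comNzRingType) (a b c d a' b' c' d' : F) :
  mx22 a b c d *m mx22 a' b' c' d' =
  mx22 (a * a' + b * c') (a * b' + b * d') (c * a' + d * c') (c * b' + d * d').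
Proof.
apply/matrixP => i j; rewrite !mxE !big_ord_recr big_ord0 /= add0r !mxE /=.
by case: i => [[|[|//]]] Hi; case: j => [[|[|//]]] Hj /=.
Qed.

Lemma add_mx22 (F : comNzRingType) (a b c d a' b' c' d' : F) :
  mx22 a b c d + mx22 a' b' c' d' = mx22 (a + a') (b + b') (c + c') (d + d').
Proof.
apply/matrixP => i j; rewrite !mxE.
by case: i => [[|[|//]]] Hi; case: j => [[|[|//]]] Hj /=.
Qed.

Lemma scale_mx22 (F : comNzRingType) (k a b c d : F) :
  k *: mx22 a b c d = mx22 (k * a) (k * b) (k * c) (k * d).
Proof.
apply/matrixP => i j; rewrite !mxE.
by case: i => [[|[|//]]] Hi; case: j => [[|[|//]]] Hj /=.
Qed.

Lemma scalar_mx22 (F : comNzRingType) (k : F) : k%:M = mx22 k 0 0 k.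
Proof.
apply/matrixP => i j; rewrite !mxE.
by case: i => [[|[|//]]] Hi; case: j => [[|[|//]]] Hj /=.
Qed.

Lemma inv_uniq (F : fieldType) (A X : 'M[F]_2) :
  A \in unitmx -> A *m X = 1%:M -> invmx A = X.
Proof. by move=> Au H; rewrite -[invmx A]mulmx1 -H mulKmx. Qed.

Lemma inv_mx22 (F : fieldType) (a b c d : F) : a * d - b * c = 1 ->
  invmx (mx22 a b c d) = mx22 d (- b) (- c) a.
Proof.
move=> H; apply: inv_uniq.
  by rewrite unitmxE det_mx22 H unitr1.
rewrite mul_mx22 scalar_mx22; apply: mx22_eq; try rewrite -H; ring.
Qed.

Record q4 (F : Type) := Q4 { qa : F; qb : F; qc : F; qd : F }.

Definition comb (F : comNzRingType) (A B : 'M[F]_2) (v : q4 F) : 'M[F]_2 :=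
  (qa v)%:M + qb v *: A + qc v *: B + qd v *: (A *m B).

Definition lA (F : comNzRingType) (x dA : F) (v : q4 F) : q4 F :=
  Q4 (- dA * qb v) (qa v + qb v * x) (- dA * qd v) (qc v + qd v * x).
Definition lAi (F : comNzRingType) (x dA : F) (v : q4 F) : q4 F :=
  let u := lA x dA v in
  Q4 (x * qa v - qa u) (x * qb v - qb u) (x * qc v - qc u) (x * qd v - qd u).
Definition lB (F : comNzRingType) (x y z dB : F) (v : q4 F) : q4 F :=
  Q4 (qb v * (z - x * y) - qc v * dB - qd v * x * dB) (qb v * y + qd v * dB)
     (qa v + qb v * x + qc v * y + qd v * z) (- qb v).
Definition lBi (F : comNzRingType) (x y z dB : F) (v : q4 F) : q4 F :=
  let u := lB x y z dB v in
  Q4 (y * qa v - qa u) (y * qb v - qb u) (y * qc v - qc u) (y * qd v - qd u).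

Definition coefL (F : comNzRingType) (x y z : F) (l : letter) (v : q4 F) : q4 F :=
  match l with
  | Rl => lA x 1 v | Ri => lAi x 1 v | Sl => lB x y z 1 v | Si => lBi x y z 1 v
  end.
Definition coef (F : comNzRingType) (x y z : F) (w : word) : q4 F :=
  foldr (coefL x y z) (Q4 1 0 0 0) w.
Definition trp (F : comNzRingType) (x y z : F) (v : q4 F) : F :=
  2 * qa v + qb v * x + qc v * y + qd v * z.
Definition P (F : comNzRingType) (x y z : F) (w : word) : F := trp x y z (coef x y z w).

Ltac mxcomp := rewrite /comb /= ?scalar_mx22 ?mul_mx22 ?scale_mx22 ?add_mx22
  ?mul_mx22 ?scale_mx22 ?add_mx22 ?tr_mx22 ?det_mx22; apply: mx22_eq; ring.

Lemma LA (F : comNzRingType) (a1 b1 c1 d1 a2 b2 c2 d2 : F) (v : q4 F) :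
  (mx22 a1 b1 c1 d1) *m comb (mx22 a1 b1 c1 d1) (mx22 a2 b2 c2 d2) v = comb (mx22 a1 b1 c1 d1) (mx22 a2 b2 c2 d2) (lA (\tr (mx22 a1 b1 c1 d1)) (\det (mx22 a1 b1 c1 d1)) v).
Proof. mxcomp. Qed.
Lemma LAi (F : comNzRingType) (a1 b1 c1 d1 a2 b2 c2 d2 : F) (v : q4 F) :
  mx22 d1 (- b1) (- c1) a1 *m comb (mx22 a1 b1 c1 d1) (mx22 a2 b2 c2 d2) v = comb (mx22 a1 b1 c1 d1) (mx22 a2 b2 c2 d2) (lAi (\tr (mx22 a1 b1 c1 d1)) (\det (mx22 a1 b1 c1 d1)) v).
Proof. mxcomp. Qed.
Lemma LB (F : comNzRingType) (a1 b1 c1 d1 a2 b2 c2 d2 : F) (v : q4 F) :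
  (mx22 a2 b2 c2 d2) *m comb (mx22 a1 b1 c1 d1) (mx22 a2 b2 c2 d2) v = comb (mx22 a1 b1 c1 d1) (mx22 a2 b2 c2 d2) (lB (\tr (mx22 a1 b1 c1 d1)) (\tr (mx22 a2 b2 c2 d2)) (\tr ((mx22 a1 b1 c1 d1) *m (mx22 a2 b2 c2 d2))) (\det (mx22 a2 b2 c2 d2)) v).
Proof. mxcomp. Qed.
Lemma LBi (F : comNzRingType) (a1 b1 c1 d1 a2 b2 c2 d2 : F) (v : q4 F) :
  mx22 d2 (- b2) (- c2) a2 *m comb (mx22 a1 b1 c1 d1) (mx22 a2 b2 c2 d2) v =
  comb (mx22 a1 b1 c1 d1) (mx22 a2 b2 c2 d2) (lBi (\tr (mx22 a1 b1 c1 d1)) (\tr (mx22 a2 b2 c2 d2)) (\tr ((mx22 a1 b1 c1 d1) *m (mx22 a2 b2 c2 d2))) (\det (mx22 a2 b2 c2 d2)) v).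
Proof. mxcomp. Qed.
Lemma Ltr (F : comNzRingType) (a1 b1 c1 d1 a2 b2 c2 d2 : F) (v : q4 F) :
  \tr (comb (mx22 a1 b1 c1 d1) (mx22 a2 b2 c2 d2) v) = trp (\tr (mx22 a1 b1 c1 d1)) (\tr (mx22 a2 b2 c2 d2)) (\tr ((mx22 a1 b1 c1 d1) *m (mx22 a2 b2 c2 d2))) v.
Proof. rewrite /comb /trp /= !scalar_mx22 !mul_mx22 !scale_mx22 !add_mx22 !tr_mx22; ring. Qed.

Lemma eval_comb (R : realType) (A B : 'M[R[i]]_2) : SL2 A -> SL2 B -> forall w,
  eval_word A B w = comb A B (coef (\tr A) (\tr B) (\tr (A *m B)) w).
Proof.
have [a1 [b1 [c1 [d1 ->]]]] := mx22P A.
have [a2 [b2 [c2 [d2 ->]]]] := mx22P B.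
rewrite /SL2 => dA dB; elim=> [|l w IH] /=.
  by rewrite /comb /= !scale0r !addr0.
rewrite IH; case: l => /=.
- by rewrite LA dA.
- by rewrite inv_mx22 -?det_mx22 // LAi dA.
- by rewrite LB dB.
- by rewrite inv_mx22 -?det_mx22 // LBi dB.
Qed.

Lemma charP (R : realType) (A B : 'M[R[i]]_2) : SL2 A -> SL2 B -> forall w,
  char_of A B w = P (\tr A) (\tr B) (\tr (A *m B)) w.
Proof.
move=> sA sB w; rewrite /char_of (eval_comb sA sB) /P.
have [a1 [b1 [c1 [d1 EA]]]] := mx22P A.
have [a2 [b2 [c2 [d2 EB]]]] := mx22P B.
by rewrite EA EB Ltr.
Qed.

Local Open Scope ring_scope.
Local Open Scope complex_scope.

Lemma coef_rmorph (F : comNzRingType) (f : {rmorphism F -> F}) (x y z : F) w :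
  Q4 (f (qa (coef x y z w))) (f (qb (coef x y z w))) (f (qc (coef x y z w))) (f (qd (coef x y z w)))
  = coef (f x) (f y) (f z) w.
Proof.
elim: w => [|l w IH] /=.
  by rewrite rmorph1 rmorph0.
rewrite -IH; case: l => /=; congr Q4;
 by rewrite ?(rmorphD, rmorphB, rmorphM, rmorphN, rmorph1).
Qed.

Lemma P_rmorph (F : comNzRingType) (f : {rmorphism F -> F}) (x y z : F) w :
  f (P x y z w) = P (f x) (f y) (f z) w.
Proof.
rewrite /P -coef_rmorph /trp /=.
by rewrite ?(rmorphD, rmorphB, rmorphM, rmorphN, rmorph1, rmorph_nat).
Qed.

Lemma P_conj (R : realType) (x y z : R[i]) w : (P x y z w)^* = P x^* y^* z^* w.
Proof. exact: (P_rmorph (complex_conjc__canonical__GRing_RMorphism R)). Qed.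

Lemma eval_cat (R : realType) (A B : 'M[R[i]]_2) s1 s2 :
  eval_word A B (s1 ++ s2) = eval_word A B s1 *m eval_word A B s2.
Proof.
elim: s1 => [|l s IH] /=; first by rewrite mul1mx.
by rewrite IH mulmxA.
Qed.

Lemma SL2_unit (R : realType) (A : 'M[R[i]]_2) : SL2 A -> A \in unitmx.
Proof. by rewrite /SL2 unitmxE => ->; rewrite unitr1. Qed.

Lemma invmxM' (R : realType) (A B : 'M[R[i]]_2) : A \in unitmx -> B \in unitmx ->
  invmx (A *m B) = invmx B *m invmx A.
Proof.
move=> uA uB; apply: inv_uniq; first by rewrite unitmx_mul uA uB.
by rewrite mulmxA -(mulmxA A) mulmxV // mulmx1 mulmxV.
Qed.

Lemma eval_phi (R : realType) (A B : 'M[R[i]]_2) : A \in unitmx -> B \in unitmx ->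
  forall w, eval_word A B (phi_word w) = eval_word B (A *m B) w.
Proof.
move=> uA uB; elim=> [|l w IH] //.
rewrite /phi_word /= -/(phi_word w) eval_cat IH.
by case: l => /=; rewrite ?mulmx1 // invmxM'.
Qed.

Lemma P_SlRlSl (R : realType) (x y z : R[i]) : P x y z [:: Sl; Rl; Sl] = z * y - x.
Proof. rewrite /P /trp /=; ring. Qed.

Lemma P_Sl (R : realType) (x y z : R[i]) : P x y z [:: Sl] = y.
Proof. rewrite /P /trp /=; ring. Qed.

Lemma fixed_rel (R : realType) (chi : word -> R[i]) : fixed_set chi ->
  (forall w, chi w = P (chi gen_s)^* (chi gen_s) (chi gen_s)^* w) /\
  (chi gen_s)^* * chi gen_s - (chi gen_s)^* = chi gen_s.
Proof.
move=> [[A [B [sA [sB Hc]]]] Hf].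
have h1 := Hf [:: Rl]; have h2 := Hf [:: Sl]; have h3 := Hf [:: Rl; Sl].
rewrite /phi_star /conj_char /= in h1 h2 h3.
rewrite !Hc /char_of /= !mulmx1 in h1 h2.
rewrite !Hc in h3; rewrite {1}(charP sA sB) P_SlRlSl /char_of /= mulmx1 in h3.
have -> : chi gen_s = \tr B by rewrite Hc /char_of /= mulmx1.
have ex : \tr A = (\tr B)^* by rewrite h1 conjcK.
split.
  by move=> w; rewrite Hc (charP sA sB) h2 ex.
by rewrite h2 ex conjcK in h3.
Qed.

Local Open Scope ring_scope.
Local Open Scope complex_scope.

Lemma circle_of_rel (R : realType) (y : R[i]) : y^* * y - y^* = y -> circle y.
Proof.
move=> H; rewrite /circle; apply/eqP; rewrite -sqrp_eq1 ?normr_ge0 //.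
rewrite sqr_normc rmorphB rmorph1; apply/eqP.
have -> : (y - 1) * (y^* - 1) = (y^* * y - y^* - y) + 1 by ring.
by rewrite H subrr add0r.
Qed.

Lemma rel_of_circle (R : realType) (c : R[i]) : circle c -> c^* * c - c^* = c.
Proof.
rewrite /circle => H.
have H2 : (c - 1) * (c^* - 1) = 1.
  by have := sqr_normc (c - 1); rewrite H expr1n rmorphB rmorph1 => <-.
have : c^* * c - c^* - c = (c - 1) * (c^* - 1) - 1 by ring.
by rewrite H2 subrr => /eqP; rewrite subr_eq0 => /eqP.
Qed.

Lemma exist_rep (R : realType) (c : R[i]) : exists A B : 'M[R[i]]_2,
  SL2 A /\ SL2 B /\ \tr A = c^* /\ \tr B = c /\ \tr (A *m B) = c^*.
Proof.
set u := c^*; set s := sqrtC (u ^+ 2 - 4); set b := (s - u) / 2.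
have hs : s ^+ 2 = u ^+ 2 - 4 by rewrite sqrtCK.
have h2 : (2 : R[i]) != 0 by rewrite pnatr_eq0.
have h4 : (4 : R[i]) != 0 by rewrite pnatr_eq0.
have hb : b * (u + b) = -1.
  have -> : b * (u + b) = (s ^+ 2 - u ^+ 2) / 4 by rewrite /b; field.
  by rewrite hs; field; rewrite -?(natrD) ?pnatr_eq0.
exists (mx22 u 1 (-1) 0), (mx22 0 b (u + b) c).
rewrite /SL2 !det_mx22 mul_mx22 !tr_mx22; split; [ring|split; [|split; [ring|split;[ring|]]]].
  by rewrite mul0r sub0r hb opprK.
ring.
Qed.

Local Open Scope ring_scope.
Local Open Scope complex_scope.

Definition Lip (R : realType) (f : R[i] -> R[i]) := exists K M : R[i],
  0 <= K /\ 0 <= M /\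
  (forall x y, circle x -> circle y -> `|f y - f x| <= K * `|y - x|) /\
  (forall x, circle x -> `|f x| <= M).

Lemma circle_bound (R : realType) (x : R[i]) : circle x -> `|x| <= 2.
Proof.
move=> cx; have -> : x = (x - 1) + 1 by rewrite subrK.
by apply: le_trans (ler_normD _ _) _; rewrite cx normr1.
Qed.

Lemma Lip_const (R : realType) (k : R[i]) : Lip (fun _ => k).
Proof.
exists 0, `|k|; split=> //; split; first exact: normr_ge0.
by split=> [x y _ _|x _]; rewrite ?subrr ?normr0 ?mul0r.
Qed.

Lemma Lip_id (R : realType) : Lip (fun c : R[i] => c).
Proof.
exists 1, 2; split=> //; split=> //; split=> [x y _ _|x cx].
  by rewrite mul1r.
exact: circle_bound.
Qed.

Lemma Lip_conj (R : realType) : Lip (fun c : R[i] => c^*).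
Proof.
exists 1, 2; split=> //; split=> //; split=> [x y _ _|x cx].
  by rewrite mul1r -rmorphB normcJ.
by rewrite normcJ; exact: circle_bound.
Qed.

Lemma LipD (R : realType) (f g : R[i] -> R[i]) : Lip f -> Lip g ->
  Lip (fun c => f c + g c).
Proof.
move=> [K1 [M1 [K10 [M10 [Hf Mf]]]]] [K2 [M2 [K20 [M20 [Hg Mg]]]]].
exists (K1 + K2), (M1 + M2); split; first exact: addr_ge0.
split; first exact: addr_ge0.
split=> [x y cx cy|x cx].
  have -> : f y + g y - (f x + g x) = (f y - f x) + (g y - g x) by ring.
  apply: le_trans (ler_normD _ _) _; rewrite mulrDl.
  by apply: lerD; [exact: Hf | exact: Hg].
by apply: le_trans (ler_normD _ _) _; apply: lerD; [exact: Mf | exact: Mg].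
Qed.

Lemma LipN (R : realType) (f : R[i] -> R[i]) : Lip f -> Lip (fun c => - f c).
Proof.
move=> [K1 [M1 [K10 [M10 [Hf Mf]]]]]; exists K1, M1; do 2!split=> //.
split=> [x y cx cy|x cx]; last by rewrite normrN; exact: Mf.
by rewrite -opprD normrN; exact: Hf.
Qed.

Lemma LipM (R : realType) (f g : R[i] -> R[i]) : Lip f -> Lip g ->
  Lip (fun c => f c * g c).
Proof.
move=> [K1 [M1 [K10 [M10 [Hf Mf]]]]] [K2 [M2 [K20 [M20 [Hg Mg]]]]].
exists (M1 * K2 + M2 * K1), (M1 * M2).
split; first by apply: addr_ge0; apply: mulr_ge0.
split; first exact: mulr_ge0.
split=> [x y cx cy|x cx].
  have -> : f y * g y - f x * g x = f y * (g y - g x) + g x * (f y - f x) by ring.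
  apply: le_trans (ler_normD _ _) _; rewrite mulrDl !normrM -!mulrA.
  apply: lerD; apply: ler_pM; rewrite ?normr_ge0 ?mulr_ge0 ?normr_ge0 //.
  - exact: Mf.
  - exact: Hg.
  - exact: Mg.
  - exact: Hf.
by rewrite normrM; apply: ler_pM; rewrite ?normr_ge0 //; [exact: Mf | exact: Mg].
Qed.

Lemma Lip_cont (R : realType) (f : R[i] -> R[i]) : Lip f -> continuous_on_set (@circle R) f.
Proof.
move=> [K [M [K0 [M0 [Hf Mf]]]]] x cx e e0.
have K1 : 0 < K + 1 by rewrite ltr_wpDl.
exists (e / (K + 1)); split; first exact: divr_gt0.
move=> y cy hyx.
apply: le_lt_trans (Hf _ _ cx cy) _.
apply: le_lt_trans (_ : K * `|y - x| <= (K + 1) * `|y - x|) _.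
  by apply: ler_wpM2r; rewrite ?normr_ge0 // lerDl.
have -> : e = (K + 1) * (e / (K + 1)) by rewrite mulrC divfK // gt_eqF.
by rewrite ltr_pM2l.
Qed.

Local Open Scope ring_scope.
Local Open Scope complex_scope.

Ltac liptac := repeat match goal with
  | |- Lip (fun _ => ?k) => apply: Lip_const
  | |- Lip (fun c => c) => apply: Lip_id
  | |- Lip (fun c => c^*) => apply: Lip_conj
  | |- Lip (fun c => @?f c + @?g c) => apply: (@LipD _ f g)
  | |- Lip (fun c => - @?f c) => apply: (@LipN _ f)
  | |- Lip (fun c => @?f c * @?g c) => apply: (@LipM _ f g)
  | H : ?G |- ?G => exact: H
  | |- Lip _ => apply: Lip_conj
  end.

Lemma Lip_coef (R : realType) w :
  Lip (fun c : R[i] => qa (coef c^* c c^* w)) /\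
  Lip (fun c : R[i] => qb (coef c^* c c^* w)) /\
  Lip (fun c : R[i] => qc (coef c^* c c^* w)) /\
  Lip (fun c : R[i] => qd (coef c^* c c^* w)).
Proof.
elim: w => [|l w [Ha [Hb [Hc Hd]]]] /=.
  by split; [|split; [|split]]; apply: Lip_const.
case: l => /=; (split; [|split; [|split]]); liptac.
Qed.

Lemma Lip_P (R : realType) w : Lip (fun c : R[i] => P c^* c c^* w).
Proof.
have [Ha [Hb [Hc Hd]]] := Lip_coef R w.
rewrite /P /trp; liptac.
Qed.

Local Open Scope ring_scope.

Lemma numconjE (R : realType) (x : R[i]) : Num.conj x = conjc x.
Proof. by []. Qed.

Theorem lemma6p4 (R : realType) :
  (* the map chi |-> chi(s) sends the fixed set into the circle *)
  (forall chi : word -> R[i], fixed_set chi -> circle (chi gen_s)) /\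
  (* it is injective on the fixed set *)
  (forall chi1 chi2 : word -> R[i], fixed_set chi1 -> fixed_set chi2 ->
     chi1 gen_s = chi2 gen_s -> forall w, chi1 w = chi2 w) /\
  (* it is onto the circle, with continuous inverse *)
  (exists g : R[i] -> (word -> R[i]),
     (forall x, circle x -> fixed_set (g x) /\ g x gen_s = x) /\
     (forall w, continuous_on_set (@circle R) (fun x => g x w))).
Proof.
split.
  by move=> chi /fixed_rel [_ H]; apply: circle_of_rel.
split.
  by move=> chi1 chi2 /fixed_rel [H1 _] /fixed_rel [H2 _] e w; rewrite H1 H2 e.
exists (fun c w => P (conjc c) c (conjc c) w); split; last first.
  by move=> w; apply: Lip_cont; apply: Lip_P.
move=> c cc; split; last exact: P_Sl.
have [A [B [sA [sB [tA [tB tAB]]]]]] := exist_rep c.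
have rel := rel_of_circle cc.
split.
  by exists A, B; split=> //; split=> // w; rewrite (charP sA sB) tA tB tAB.
move=> w; rewrite /phi_star /conj_char.
have -> : conjc (P (conjc c) c (conjc c) w) = P c (conjc c) c w.
  by rewrite P_conj !numconjE conjcK.
have -> : P (conjc c) c (conjc c) (phi_word w) = char_of A B (phi_word w).
  by rewrite (charP sA sB) tA tB tAB.
have sAB : SL2 (A *m B) by rewrite /SL2 det_mulmx sA sB mulr1.
have e3 : \tr (B *m (A *m B)) = c.
  have := charP sA sB [:: Sl; Rl; Sl].
  by rewrite P_SlRlSl /char_of /= mulmx1 tA tB tAB => ->; exact: rel.
rewrite /char_of (eval_phi (SL2_unit sA) (SL2_unit sB)) -/(char_of B (A *m B) w).
by rewrite (charP sB sAB) tB tAB e3.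
Qed.
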